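(* Let $G$ be a finite group, $\mathsf K$ a simplicial $G$-complex and $\mathsf K'$ a $G$-subcomplex of $\mathsf K$. Then $\mathsf K$ $G$-collapses onto $\mathsf K'$ if and only if there is an acyclic partial $G$-matching on $\mathcal F(\mathsf K)$ whose set of critical elements is exactly $\mathcal F(\mathsf K')$.
   Context: A simplicial $G$-complex is a simplicial complex with a right action of $G$ by simplicial automorphisms; a $G$-subcomplex is a $G$-invariant subcomplex. $\mathcal F(\mathsf K)$ is the poset of nonempty simplices of $\mathsf K$ ordered by inclusion; $x\succ y$ ($x$ covers $y$) means $y<x$ with nothing strictly between. A facet is a maximal simplex; a simplex $\sigma$ is free if it is a proper face of exactly one facet $\varphi_\sigma$. A collection of free simplices is independently free if no two distinct members have a common coface. For a free $\sigma$ with $\dim\varphi_\sigma=\dim\sigma+1$ and $\sigma G$ independently free, an elementary $G$-collapse replaces $\mathsf K$ by the subcomplex of simplices having no $\sigma g$ ($g\in G$) as a face. $\mathsf K$ $G$-collapses onto $\mathsf K'$ if there is a finite sequence of elementary $G$-collapses leading from $\mathsf K$ to $\mathsf K'$. A partial $G$-matching on $\mathcal F(\mathsf K)$ is a pair $(\Sigma,\mu)$ of a $G$-invariant subset $\Sigma\subseteq\mathcal F(\mathsf K)$ and a $G$-equivariant injection $\mu:\Sigma\to\mathcal F(\mathsf K)\setminus\Sigma$ with $\mu(x)\succ x$ for all $x\in\Sigma$. Its critical elements are those of $\mathcal F(\mathsf K)\setminus(\Sigma\cup\mu(\Sigma))$. It is acyclic if there is no sequence of distinct $x_0,\dots,x_t\in\Sigma$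 ($t\ge1$) with $\mu(x_0)\succ x_1,\ \mu(x_1)\succ x_2,\dots,\mu(x_{t-1})\succ x_t$ and $\mu(x_t)\succ x_0$. *)

(* Defs.v *)
From mathcomp Require Import all_boot all_fingroup.
Set Implicit Arguments. Unset Strict Implicit. Unset Printing Implicit Defensive.

Section SimplicialG.
Variables (gT : finGroupType) (V : finType) (to : {action gT &-> V}).

Definition sact (s : {set V}) (g : gT) : {set V} := [set to x g | x in s].

(* A finite abstract simplicial complex on V, represented by its set of
   NONEMPTY simplices, i.e. K itself is the face poset F(K). *)
Definition is_complex (K : {set {set V}}) : Prop :=
  set0 \notin K /\
  forall s t : {set V}, s \in K -> t \subset s -> t != set0 -> t \in K.

Definition G_invariant (S : {set {set V}}) : Prop :=
  forall (s : {set V}) (g : gT), s \in S -> sact s g \in S.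

Definition is_Gcomplex (K : {set {set V}}) : Prop :=
  is_complex K /\ G_invariant K.

Definition is_Gsubcomplex (K' K : {set {set V}}) : Prop :=
  is_Gcomplex K' /\ K' \subset K.

Definition covers (K : {set {set V}}) (x y : {set V}) : bool :=
  [&& x \in K, y \in K, y \proper x &
      ~~ [exists z in K, (y \proper z) && (z \proper x)]].

Definition facet (K : {set {set V}}) (s : {set V}) : bool :=
  (s \in K) && ~~ [exists t in K, s \proper t].

Definition free (K : {set {set V}}) (s : {set V}) : bool :=
  (s \in K) && (#|[set f in K | facet K f && (s \proper f)]| == 1).

Definition indep_free (K : {set {set V}}) (S : {set {set V}}) : Prop :=
  (forall s, s \in S -> free K s) /\
  (forall s t, s \in S -> t \in S -> s != t ->
     ~ exists c, [/\ c \in K, s \subset c & t \subset c]).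

Definition orbit_s (s : {set V}) : {set {set V}} := [set sact s g | g : gT].

Definition elem_Gcollapse (K K' : {set {set V}}) : Prop :=
  exists sigma : {set V},
    [/\ free K sigma,
        (exists phi, [/\ facet K phi, sigma \proper phi & #|phi| = #|sigma|.+1]),
        indep_free K (orbit_s sigma) &
        K' = [set t in K | [forall g : gT, ~~ (sact sigma g \subset t)]]].

Inductive Gcollapses : {set {set V}} -> {set {set V}} -> Prop :=
| Gcollapses_refl K : Gcollapses K K
| Gcollapses_step K K1 K' : elem_Gcollapse K K1 -> Gcollapses K1 K' ->
    Gcollapses K K'.

Definition partial_Gmatching (K : {set {set V}}) (Sigma : {set {set V}})
    (mu : {set V} -> {set V}) : Prop :=
  [/\ Sigma \subset K /\ G_invariant Sigma,
      (forall s g, s \in Sigma -> mu (sact s g) = sact (mu s) g),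
      {in Sigma &, injective mu},
      (forall s, s \in Sigma -> (mu s \in K) && (mu s \notin Sigma)) &
      (forall s, s \in Sigma -> covers K (mu s) s)].

Definition critical (K Sigma : {set {set V}}) (mu : {set V} -> {set V})
  : {set {set V}} := [set x in K | (x \notin Sigma) && (x \notin mu @: Sigma)].

Definition acyclic_matching (K Sigma : {set {set V}})
    (mu : {set V} -> {set V}) : Prop :=
  forall s : seq {set V},
    1 < size s -> uniq s -> all (fun x => x \in Sigma) s ->
    ~~ path.cycle (fun x y => covers K (mu x) y) s.

End SimplicialG.

(* Main.v *)
Require Import Defs.
From mathcomp Require Import all_boot all_fingroup.
Set Implicit Arguments. Unset Strict Implicit. Unset Printing Implicit Defensive.

Lemma cycle_exists (T : finType) (A : {set T}) (e : rel T) b0 :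
  b0 \in A -> (forall b, b \in A -> exists2 a, a \in A & (a != b) && e a b) ->
  exists s : seq T, [/\ 1 < size s, uniq s, all (fun x => x \in A) s & path.cycle e s].
Proof.
move=> Ab0 Hpred.
pose p b := odflt b [pick a in A | (a != b) && e a b].
have Hp b : b \in A -> [/\ p b \in A, p b != b & e (p b) b].
  move=> Ab; rewrite /p; case: pickP => [a /= /andP[Aa /andP[nab eab]] | H].
    by [].
  by case: (Hpred b Ab) => a Aa Ha; move: (H a) => /=; rewrite Aa Ha.
have HA m z : z \in A -> iter m p z \in A.
  by move=> Az; elim: m => //= m IH; case: (Hp _ IH).
have HAt m z : z \in A -> all (fun x => x \in A) (traject p z m).
  elim: m z => //= m IH z Az; rewrite Az /=; apply: IH; by case: (Hp _ Az).
set n := fingraph.order p b0.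
have := looping_order p b0; rewrite -/n /looping => /trajectP [i ltin Hi].
set k := n - i; set y := iter i p b0.
have Hn : n = i + k by rewrite /k subnKC // ltnW.
have Uo : uniq (traject p b0 n) by apply: orbit_uniq.
rewrite Hn trajectD in Uo; move: Uo; rewrite cat_uniq => /and3P [_ _ Uc].
have Ay : y \in A by apply: HA.
have Hky : iter k p y = y by rewrite /y -iterD addnC -Hn.
have k2 : 1 < k.
  rewrite /k; case Hk : (n - i) => [|[|k']] //.
    by move: ltin; rewrite -subn_gt0 Hk.
  move: Hky; rewrite /k Hk /= => Hpy; case: (Hp _ Ay) => _; by rewrite Hpy eqxx.
have Cc : fcycle p (traject p y k).
  move: (k) (ltnW k2) Hky => [|k'] // _ Hky; rewrite trajectS /=.
  have -> : rcons (traject p (p y) k') y = traject p (p y) k'.+1.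
    by rewrite trajectSr -iterSr Hky.
  exact: fpath_traject.
exists (rev (traject p y k)); split.
- by rewrite size_rev size_traject.
- by rewrite rev_uniq.
- by rewrite all_rev HAt.
rewrite rev_cycle; apply: (sub_in_cycle (P := fun x => x \in A)) (HAt _ _ Ay) Cc.
move=> a b Aa _ /= /eqP <-; by case: (Hp _ Aa).
Qed.
Lemma ex_maxcard (T : finType) (P : pred T) (F : T -> nat) s0 :
  P s0 -> exists2 m, P m & forall t, P t -> F t <= F m.
Proof.
move=> Ps0; case: (@arg_maxnP T s0 P F Ps0) => m Pm Hm.
by exists m.
Qed.

Section Basics.
Variables (gT : finGroupType) (V : finType) (to : {action gT &-> V}).
Implicit Types (s t : {set V}) (g h : gT).

Lemma sactM s g h : sact to (sact to s g) h = sact to s (g * h).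
Proof.
rewrite /sact -imset_comp; apply: eq_imset => x /=; by rewrite actM.
Qed.

Lemma sact1 s : sact to s 1 = s.
Proof.
rewrite /sact (eq_imset _ (act1 to)); exact: imset_id.
Qed.

Lemma sactK s g : sact to (sact to s g) g^-1 = s.
Proof. by rewrite sactM mulgV sact1. Qed.

Lemma sactKV s g : sact to (sact to s g^-1) g = s.
Proof. by rewrite sactM mulVg sact1. Qed.

Lemma card_sact s g : #|sact to s g| = #|s|.
Proof. apply: card_imset; exact: act_inj. Qed.

Lemma sactS s t g : s \subset t -> sact to s g \subset sact to t g.
Proof. exact: imsetS. Qed.

Lemma sact_proper s t g : s \proper t -> sact to s g \proper sact to t g.
Proof.
rewrite !properEcard !card_sact => /andP[st ->]; by rewrite sactS.
Qed.

Lemma sact_inj g : injective (sact to ^~ g).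
Proof. move=> s t /= E; by rewrite -(sactK s g) E sactK. Qed.

Lemma sact_neq0 s g : s != set0 -> sact to s g != set0.
Proof. by rewrite -!card_gt0 card_sact. Qed.

Lemma coversE (K : {set {set V}}) x y : is_complex K ->
  covers K y x = [&& y \in K, x \in K, x \subset y & #|y| == #|x|.+1].
Proof.
move=> [K0 KC]; rewrite /covers; case yK: (y \in K); case xK: (x \in K) => //=.
apply/idP/idP.
- case/andP=> pxy /existsPn nz; rewrite (proper_sub pxy) /=.
  have ltxy : #|x| < #|y| by rewrite (proper_card pxy).
  apply/eqP/anti_leq; rewrite ltxy andbT; rewrite leqNgt; apply/negP => lt2.
  case/properP: pxy => sxy [v vy vx].
  set z := v |: x.
  have cz : #|z| = #|x|.+1 by rewrite cardsU1 vx.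
  have zK : z \in K.
    apply: (KC y) => //; first by rewrite subUset sub1set vy.
    by apply/set0Pn; exists v; rewrite !inE eqxx.
  move: (nz z); rewrite zK /= !properEcard cz ltnSn lt2 subsetUr subUset sub1set vy sxy.
  by [].
- case/andP=> sxy /eqP cy; rewrite properEcard sxy cy ltnSn /=.
  apply/existsPn => z; apply/negP => /andP[_ /andP[]].
  rewrite !properEcard cy => /andP[_ h1] /andP[_ h2].
  by have := leq_trans h1 h2; rewrite ltnn.
Qed.

Lemma facet_above (K : {set {set V}}) c : c \in K ->
  exists2 f, facet K f & c \subset f.
Proof.
move=> cK.
have [f /andP[fK cf] Hf] := @ex_maxcard _ (fun t => (t \in K) && (c \subset t)) (fun t => #|t|) c (introT andP (conj cK (subxx c))).
exists f => //; rewrite /facet fK /=; apply/existsPn => t; apply/negP => /andP[tK ft].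
have := Hf t; rewrite tK (subset_trans cf (proper_sub ft)) => /(_ isT).
by rewrite leqNgt (proper_card ft).
Qed.


Lemma collapse_empty (K K' : {set {set V}}) mu :
  critical K set0 mu = K' -> Gcollapses to K K'.
Proof.
rewrite /critical imset0 => <-.
have -> : [set x in K | (x \notin set0) && (x \notin set0)] = K.
  by apply/setP => x; rewrite !inE andbT.
exact: Gcollapses_refl.
Qed.

Lemma match_collapse n : forall (K K' Sigma : {set {set V}}) mu,
  #|Sigma| <= n -> is_complex K -> is_complex K' ->
  partial_Gmatching to K Sigma mu -> acyclic_matching K Sigma mu ->
  critical K Sigma mu = K' -> Gcollapses to K K'.
Proof.
elim: n => [|n IH] K K' Sigma mu hcard cK cK' [[SK SI] Meq Minj MK Mcov] Acyc Crit.
  move: hcard; rewrite leqn0 cards_eq0 => /eqP S0; rewrite S0 in Crit.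
  exact: collapse_empty Crit.
have [S0|[s0 s0S]] := set_0Vmem Sigma.
  rewrite S0 in Crit; exact: collapse_empty Crit.
have SKm s : s \in Sigma -> s \in K by move=> sS; apply: (subsetP SK).
have K0 s : s \in K -> s != set0.
  by move=> sK; apply/eqP => E; case: cK => /negP; rewrite -E.
have Hmu s : s \in Sigma -> [/\ mu s \in K, mu s \notin Sigma, s \subset mu s & #|mu s| = #|s|.+1].
  move=> sS; have := Mcov s sS; rewrite coversE // => /and4P[muK _ smu /eqP cmu].
  by case/andP: (MK s sS) => _ ->; rewrite muK smu cmu.
have CritE y : (y \in K') = [&& y \in K, y \notin Sigma & y \notin mu @: Sigma].
  by rewrite -Crit inE.
have [x1 x1S Hx1] := @ex_maxcard _ (fun x => x \in Sigma) (fun x => #|x|) s0 s0S.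
set d := #|x1| in Hx1.
pose src (x : {set V}) := [forall a in Sigma, (x \subset mu a) ==> (a == x)].
have Hcof x c : x \in Sigma -> #|x| = d -> src x -> c \in K -> x \subset c ->
    c = x \/ c = mu x.
  move=> xS cx sx cKc xc.
  have cnK' : c \notin K'.
    apply/negP => cK'c; have xK' : x \in K' by apply: (cK'.2 c) => //; apply: K0; apply: SKm.
    by move: xK'; rewrite CritE xS /= andbF.
  move: cnK'; rewrite CritE cKc /= negb_and !negbK => /orP[cS | /imsetP[a aS cE]]; last subst c.
    left; apply/eqP; rewrite eq_sym eqEcard xc cx; exact: Hx1.
  right; move/forall_inP: sx => /(_ a aS) /implyP /(_ xc) /eqP ->; done.
have [x0 [x0S cx0 sx0]] : exists x0, [/\ x0 \in Sigma, #|x0| = d & src x0].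
  case: (boolP [exists x in [set x in Sigma | #|x| == d], src x]).
    by case/exists_inP => x; rewrite inE => /andP[xS /eqP cx] sx; exists x.
  move/exists_inPn => Hns.
  have [s [s1 us as_ cs]] : exists s : seq {set V},
      [/\ 1 < size s, uniq s, all (fun x => x \in [set x in Sigma | #|x| == d]) s &
       path.cycle (fun a b => covers K (mu a) b) s].
    apply: (cycle_exists (b0 := x1)); first by rewrite inE x1S eqxx.
    move=> b; rewrite inE => /andP[bS /eqP cb].
    move: (Hns b); rewrite inE bS cb eqxx => /(_ isT) /forall_inPn [a aS].
    rewrite negb_imply => /andP[bmu nab].
    have [muK munS amu cmu] := Hmu a aS.
    have bne : b != mu a by apply: contraNneq munS => <-.
    have pb : b \proper mu a by rewrite properEneq bne bmu.
    have ltb := proper_card pb.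
    have ca : #|a| = d by apply/eqP; rewrite eqn_leq Hx1 // -ltnS -cmu -cb ltb.
    exists a; first by rewrite inE aS ca eqxx.
    by rewrite nab /= coversE // muK (SKm b bS) bmu cmu ca cb eqxx.
  have as' : all (fun x => x \in Sigma) s.
    by apply: sub_all as_ => x; rewrite inE => /andP[].
  by move: (Acyc s s1 us as') => /negP.
pose O := orbit_s to x0.
have HO y : y \in O -> [/\ y \in Sigma, #|y| = d & src y].
  case/imsetP => g _ ->{y}; split; first exact: SI.
    by rewrite card_sact.
  apply/forall_inP => a aS; apply/implyP => sa.
  have a'S : sact to a g^-1 \in Sigma by apply: SI.
  have : x0 \subset mu (sact to a g^-1).
    by rewrite Meq // -(sactK x0 g); apply: sactS.
  move/forall_inP: sx0 => /(_ _ a'S) /implyP H /H /eqP <-.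
  by rewrite sactKV.
have x0O : x0 \in O by apply/imsetP; exists 1%g => //; rewrite sact1.
have Hcof2 y c : y \in O -> c \in K -> y \subset c -> c = y \/ c = mu y.
  by move=> yO; case: (HO y yO) => yS cy sy; apply: Hcof.
have Hfree y : y \in O -> [/\ free K y, facet K (mu y) & y \proper mu y].
  move=> yO; case: (HO y yO) => yS cy sy.
  have [muK munS ymu cmu] := Hmu y yS.
  have pmu : y \proper mu y by rewrite properEcard ymu cmu ltnSn.
  have fmu : facet K (mu y).
    rewrite /facet muK /=; apply/existsPn => t; apply/negP => /andP[tK pt].
    case: (Hcof2 y t yO tK (subset_trans ymu (proper_sub pt))) => E; subst t.
      by have := proper_trans pmu pt; rewrite properxx.
    by rewrite properxx in pt.
  split => //; rewrite /free (SKm y yS) /=.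
  have -> : [set f in K | facet K f && (y \proper f)] = [set mu y].
    apply/setP => f; rewrite !inE; apply/idP/idP.
      case/and3P => fK _ pf; case: (Hcof2 y f yO fK (proper_sub pf)) => E; subst f.
        by rewrite properxx in pf.
      by [].
    by move/eqP => ->; rewrite muK fmu pmu.
  by rewrite cards1.
pose K1 := [set t in K | [forall g : gT, ~~ (sact to x0 g \subset t)]].
have K1E y : (y \in K1) = (y \in K) && [forall g : gT, ~~ (sact to x0 g \subset y)].
  by rewrite inE.
have K1K y : y \in K1 -> y \in K by rewrite K1E => /andP[].
have Hout y : y \in K -> y \notin K1 -> exists g, y = sact to x0 g \/ y = mu (sact to x0 g).
  move=> yK; rewrite K1E yK /= => /forallPn [g]; rewrite negbK => sy.
  exists g; apply: Hcof2 => //; apply/imsetP; by exists g.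
have OK1 y : y \in O -> y \notin K1.
  case/imsetP => g _ ->; rewrite K1E negb_and; apply/orP; right.
  by apply/forallPn; exists g; rewrite negbK.
have muOK1 y : y \in O -> mu y \notin K1.
  case/imsetP => g _ ->; rewrite K1E negb_and; apply/orP; right.
  apply/forallPn; exists g; rewrite negbK.
  have : sact to x0 g \in O by apply/imsetP; exists g.
  by case/HO => /Hmu [].
have cK1 : is_complex K1.
  split; first by apply/negP => /K1K; case: cK => /negP.
  move=> t u; rewrite !K1E => /andP[tK Ht] ut u0; apply/andP; split.
    exact: (cK.2 t).
  apply/forallP => g; apply: contra (forallP Ht g) => H; exact: subset_trans ut.
pose Sigma1 := Sigma :\: O.
have S1E y : (y \in Sigma1) = (y \notin O) && (y \in Sigma) by rewrite inE.
apply: (@Gcollapses_step _ _ _ K K1 K').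
  exists x0; split.
  - by case: (Hfree x0 x0O).
  - exists (mu x0); case: (Hfree x0 x0O) => _ fm pm; split => //.
    by case: (Hmu x0 x0S).
  - split; first by move=> y /Hfree [].
    move=> y z yO zO nyz [c [cKc yc zc]].
    have [yS _ _] := HO y yO; have [zS _ _] := HO z zO.
    case: (Hcof2 y c yO cKc yc) => E1; case: (Hcof2 z c zO cKc zc) => E2.
    + by move: nyz; rewrite -E1 -E2 eqxx.
    + by case: (Hmu z zS) => _; rewrite -E2 E1 yS.
    + by case: (Hmu y yS) => _; rewrite -E1 E2 zS.
    + by move: nyz; rewrite (Minj y z yS zS) ?eqxx // -E1 -E2.
  - by [].
have S1K1 y : y \in Sigma1 -> y \in K1.
  rewrite S1E => /andP[yO yS].
  apply/negPn/negP => yK1; case: (Hout y (SKm y yS) yK1) => g [E|E].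
    by move: yO; rewrite E; case/negP; apply/imsetP; exists g.
  have gO : sact to x0 g \in O by apply/imsetP; exists g.
  have [gS _ _] := HO _ gO.
  by case: (Hmu _ gS) => _; rewrite -E yS.
have muS1K1 y : y \in Sigma1 -> mu y \in K1.
  rewrite S1E => /andP[yO yS].
  have [muK munS _ _] := Hmu y yS.
  apply/negPn/negP => mK1; case: (Hout _ muK mK1) => g [E|E].
    have gO : sact to x0 g \in O by apply/imsetP; exists g.
    by case: (HO _ gO) => gS _ _; move: munS; rewrite E gS.
  have gO : sact to x0 g \in O by apply/imsetP; exists g.
  have [gS _ _] := HO _ gO.
  move: yO; rewrite (Minj _ _ yS gS E); by rewrite gO.
have S1S y : y \in Sigma1 -> y \in Sigma by rewrite S1E => /andP[].
have cov1 a b : covers K1 a b -> covers K a b.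
  rewrite !coversE // => /and4P[aK bK -> ->]; by rewrite (K1K a aK) (K1K b bK).
apply: (IH K1 K' Sigma1 mu).
- have H1 : Sigma1 \subset Sigma :\ x0.
    apply/subsetP => y; rewrite S1E !inE => /andP[yO ->]; rewrite andbT.
    by apply: contraNneq yO => ->.
  move: hcard; rewrite (cardsD1 x0) x0S add1n ltnS; apply: leq_trans.
  exact: subset_leq_card.
- exact: cK1.
- exact: cK'.
- split.
  + split; first by apply/subsetP => y /S1K1.
    move=> y g; rewrite !S1E => /andP[yO yS]; rewrite (SI y g yS) andbT.
    apply: contra yO => /imsetP [h _ E]; apply/imsetP; exists (h * g^-1)%g => //.
    by rewrite -sactM -E sactK.
  + by move=> y g /S1S; apply: Meq.
  + by move=> y z /S1S yS /S1S zS; apply: Minj.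
  + move=> y yS1; rewrite muS1K1 //= S1E negb_and; apply/orP; right.
    by case: (Hmu y (S1S y yS1)).
  + move=> y yS1; rewrite coversE // muS1K1 // S1K1 //.
    by case: (Hmu y (S1S y yS1)) => _ _ -> -> /=.
- move=> s s1 us as1; apply: contraT; rewrite negbK => cs.
  have as' : all (fun x => x \in Sigma) s by apply: sub_all as1 => y /S1S.
  move: (Acyc s s1 us as'); rewrite (sub_cycle _ cs) //.
  move=> a b; exact: cov1.
apply/setP => y; rewrite CritE inE.
apply/idP/idP.
- case/and3P => yK1 yS1 ymu; rewrite (K1K y yK1) /=.
  have ynS : y \notin Sigma.
    apply/negP => yS; move: yS1; rewrite S1E yS andbT negbK => yO.
    by move: (OK1 y yO); rewrite yK1.
  rewrite ynS /=; apply/negP => /imsetP [a aS E].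
  case aO : (a \in O).
    by move: (muOK1 a aO); rewrite -E yK1.
  by move: ymu; rewrite E; case/negP; apply/imsetP; exists a => //; rewrite S1E aO aS.
- case/and3P => yK ynS ynmu.
  have yK1 : y \in K1.
    apply/negPn/negP => yK1; case: (Hout y yK yK1) => g [E|E].
      have gO : sact to x0 g \in O by apply/imsetP; exists g.
      by case: (HO _ gO) => gS _ _; move: ynS; rewrite E gS.
    have gO : sact to x0 g \in O by apply/imsetP; exists g.
    have [gS _ _] := HO _ gO.
    by move: ynmu; rewrite E; case/negP; apply/imsetP; exists (sact to x0 g).
  rewrite yK1 /= S1E negb_and ynS orbT /=.
  apply: contra ynmu => /imsetP [a aS ->]; apply/imsetP; exists a => //; exact: S1S.
Qed.


Lemma facet_sact (K : {set {set V}}) f g : G_invariant to K -> facet K f -> facet K (sact to f g).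
Proof.
move=> iK /andP[fK nf]; rewrite /facet iK //=; apply/existsPn => t; apply/negP => /andP[tK pt].
move/existsPn: nf => /(_ (sact to t g^-1)); rewrite iK //= -(sactK f g).
by rewrite sact_proper.
Qed.

Lemma collapse_match (K K' : {set {set V}}) : Gcollapses to K K' ->
  is_complex K -> G_invariant to K ->
  exists (Sigma : {set {set V}}) (mu : {set V} -> {set V}),
     [/\ partial_Gmatching to K Sigma mu,
         acyclic_matching K Sigma mu &
         critical K Sigma mu = K'].
Proof.
elim => {K K'} [K|K K1 K' [sigma [fs [phi [fphi sp cphi]] [indf indc] E]] _ IH] cK iK.
  exists set0, id; split.
  - split; first by split; [apply: sub0set | move=> s g; rewrite inE].
    + by move=> s g; rewrite inE.
    + by move=> s t; rewrite inE.
    + by move=> s; rewrite inE.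
    + by move=> s; rewrite inE.
  - by case=> [|a s] // _ _ /=; rewrite inE.
  - by apply/setP => x; rewrite !inE imset0 !inE andbT.
have sK : sigma \in K by case/andP: fs.
have K0 s : s \in K -> s != set0.
  by move=> sK'; apply/eqP => E0; case: cK => /negP; rewrite -E0.
have phiK : phi \in K by case/andP: fphi.
have K1E y : (y \in K1) = (y \in K) && [forall g : gT, ~~ (sact to sigma g \subset y)].
  by rewrite E inE.
have K1K y : y \in K1 -> y \in K by rewrite K1E => /andP[].
have cK1 : is_complex K1.
  split; first by apply/negP => /K1K; case: cK => /negP.
  move=> t u; rewrite !K1E => /andP[tK Ht] ut u0; apply/andP; split.
    exact: (cK.2 t).
  apply/forallP => g; apply: contra (forallP Ht g) => H; exact: subset_trans ut.
have iK1 : G_invariant to K1.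
  move=> t g; rewrite !K1E => /andP[tK Ht]; rewrite iK //=.
  apply/forallP => h; apply/negP => H.
  move/forallP: Ht => /(_ (h * g^-1)%g) /negP; apply.
  by rewrite -sactM -(sactK t g); apply: sactS.
have [Sigma1 [mu1 [[[SK1 SI1] Meq1 Minj1 MK1 Mcov1] Acyc1 Crit1]]] := IH cK1 iK1.
pose O := orbit_s to sigma.
have inO g : sact to sigma g \in O by apply/imsetP; exists g.
have sgK g : sact to sigma g \in K by apply: iK.
have pgK g : sact to phi g \in K by apply: iK.
have pgp g : sact to sigma g \proper sact to phi g by apply: sact_proper.
have cpg g : #|sact to phi g| = #|sact to sigma g|.+1 by rewrite !card_sact.
pose FS (y : {set V}) := [set f in K | facet K f && (y \proper f)].
have FSg g : FS (sact to sigma g) = [set sact to phi g].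
  have /andP[_ /cards1P [f0 Ef0]] := indf _ (inO g).
  have : sact to phi g \in FS (sact to sigma g).
    by rewrite inE pgK facet_sact // pgp.
  by rewrite /FS Ef0 inE => /eqP <-.
pose F (y : {set V}) := odflt y [pick f in K | facet K f && (y \proper f)].
pose mu (y : {set V}) := if y \in O then F y else mu1 y.
have muO g : mu (sact to sigma g) = sact to phi g.
  rewrite /mu inO /F; case: pickP => [f /= Hf | H].
    have : f \in FS (sact to sigma g) by rewrite inE.
    by rewrite FSg inE => /eqP.
  have : sact to phi g \in FS (sact to sigma g) by rewrite FSg inE.
  by rewrite inE H.
have cof g c : c \in K -> sact to sigma g \subset c ->
    c = sact to sigma g \/ c = sact to phi g.
  move=> cKc sc; case: (eqVneq c (sact to sigma g)) => [->|ne]; first by left.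
  right; have pc : sact to sigma g \proper c by rewrite properEneq eq_sym ne sc.
  have [f ff cf] := facet_above cKc.
  have : f \in FS (sact to sigma g).
    by rewrite inE ff (proper_sub_trans pc cf) andbT; case/andP: ff => ->.
  rewrite FSg inE => /eqP Ef; subst f.
  apply/eqP; rewrite eqEcard cf /= cpg; exact: proper_card pc.
have OK1 g : sact to sigma g \notin K1.
  by rewrite K1E negb_and; apply/orP; right; apply/forallPn; exists g; rewrite negbK.
have PK1 g : sact to phi g \notin K1.
  rewrite K1E negb_and; apply/orP; right; apply/forallPn; exists g; rewrite negbK.
  exact: proper_sub (pgp g).
have OK1' y : y \in O -> y \notin K1 by case/imsetP => g _ ->.
have S1K y : y \in Sigma1 -> y \in K1 by move=> yS; apply: (subsetP SK1).
have S1nO y : y \in Sigma1 -> y \notin O.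
  by move=> /S1K yK1; apply: contraL yK1; apply: OK1'.
have muS1 y : y \in Sigma1 -> mu y = mu1 y by move=> /S1nO yO; rewrite /mu (negbTE yO).
have Hout y : y \in K -> y \notin K1 -> exists g, y = sact to sigma g \/ y = sact to phi g.
  move=> yK; rewrite K1E yK /= => /forallPn [g]; rewrite negbK => sy.
  by exists g; apply: cof.
have cov1 a b : covers K1 a b -> covers K a b.
  rewrite !coversE // => /and4P[aK bK -> ->]; by rewrite (K1K a aK) (K1K b bK).
have ncommon g h : sact to sigma g \subset sact to phi h -> sact to sigma g = sact to sigma h.
  move=> sgh; apply/eqP/negPn/negP => ne.
  apply: (indc _ _ (inO g) (inO h) ne); exists (sact to phi h); split => //.
  exact: proper_sub (pgp h).
pose Sigma := Sigma1 :|: O.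
have SE y : (y \in Sigma) = (y \in Sigma1) || (y \in O) by rewrite inE.
exists Sigma, mu; split.
- split.
  + split.
      apply/subsetP => y; rewrite SE => /orP[/S1K /K1K // | /imsetP[g _ ->]].
      exact: sgK.
    move=> y g; rewrite !SE => /orP[yS | /imsetP[h _ ->]].
      by rewrite SI1.
    by rewrite sactM inO orbT.
  + move=> y g; rewrite SE => /orP[yS | /imsetP[h _ ->]].
      by rewrite !muS1 ?SI1 //; apply: Meq1.
    by rewrite sactM !muO sactM.
  + move=> y z; rewrite !SE => /orP[yS | /imsetP[g _ ->]] /orP[zS | /imsetP[h _ ->]].
    * by rewrite (muS1 _ yS) (muS1 _ zS); apply: Minj1.
    * rewrite (muS1 _ yS) muO => Eq; move: (PK1 h); rewrite -Eq.
      by case/andP: (MK1 y yS) => ->.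
    * rewrite (muS1 _ zS) muO => Eq; move: (PK1 g); rewrite Eq.
      by case/andP: (MK1 z zS) => ->.
    * rewrite !muO => Eq; apply: ncommon; rewrite -Eq; exact: proper_sub (pgp g).
  + move=> y; rewrite SE => /orP[yS | /imsetP[g _ ->]].
      rewrite muS1 //; case/andP: (MK1 y yS) => mK1 mnS.
      rewrite (K1K _ mK1) /= SE negb_or mnS /=.
      by apply: contraL mK1; apply: OK1'.
    rewrite muO pgK /= SE negb_or; apply/andP; split.
      by apply/negP => /S1K; apply/negP: (PK1 g).
    apply/negP => /imsetP [h _ Eq]; move: (cpg g); rewrite Eq !card_sact.
    by move/eqP; rewrite eqn_leq ltnn andbF.
  + move=> y; rewrite SE => /orP[yS | /imsetP[g _ ->]].
      rewrite muS1 //; exact: cov1 (Mcov1 y yS).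
    rewrite muO coversE // pgK sgK cpg eqxx (proper_sub (pgp g)) //.
- have stepS y z : y \in Sigma1 -> z \in Sigma -> covers K (mu y) z -> z \in Sigma1.
    move=> yS zS; rewrite (muS1 _ yS) coversE // => /and4P[_ zK zsub _].
    have /andP[mK1 _] := MK1 y yS.
    have zK1 : z \in K1 by apply: (cK1.2 (mu1 y)) => //; apply: K0.
    move: zS; rewrite SE => /orP[// | zO].
    by move: (OK1' z zO); rewrite zK1.
  have pathS l y : y \in Sigma1 -> all (fun x => x \in Sigma) l ->
      path (fun a b => covers K (mu a) b) y l -> last y l \in Sigma1.
    elim: l y => //= z l IHl y yS /andP[zS al] /andP[eyz pl].
    apply: IHl => //; exact: stepS eyz.
  move=> s s1 us as_; apply/negP => cs.
  have allS1 : all (fun x => x \in Sigma1) s.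
    apply/allP => x xs; apply/negPn/negP => xnS1.
    have xO : x \in O by move: (allP as_ x xs); rewrite SE (negbTE xnS1).
    case: (rot_to xs) => i s' Er.
    have cs' := cs; rewrite -(rot_cycle i) Er in cs'.
    have us' := us; rewrite -(rot_uniq i) Er in us'.
    have as' : all (fun x => x \in Sigma) (x :: s').
      by rewrite -Er; apply/allP => z; rewrite mem_rot => /(allP as_).
    have ss' : 1 < size (x :: s') by rewrite -Er size_rot.
    case: s' Er cs' us' as' ss' => [|y s''] // _ cs' us' as' _.
    move: cs' => /= /andP[exy pyl].
    move: as' => /= /and3P[_ yS as''].
    case/imsetP: xO => g _ Ex; subst x.
    have yS1 : y \in Sigma1.
      move: yS; rewrite SE => /orP[// | /imsetP[h _ Ey]]; subst y.
      move: exy; rewrite muO coversE // => /and4P[_ _ sub _].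
      move: us' => /= /andP; rewrite inE (ncommon _ _ sub) eqxx /=; by case.
    have Hl : all (fun x => x \in Sigma) (rcons s'' (sact to sigma g)).
      by rewrite all_rcons as'' andbT; apply: (allP as_).
    by move: (pathS _ _ yS1 Hl pyl); rewrite last_rcons (negbTE xnS1).
  move: (Acyc1 s s1 us allS1) => /negP; apply.
  apply: (sub_in_cycle (P := fun x => x \in Sigma1)) allS1 cs.
  move=> a b aS bS; rewrite (muS1 _ aS) !coversE // => /and4P[_ _ sub c].
  by case/andP: (MK1 a aS) => -> _; rewrite S1K // sub c.
apply/setP => y; rewrite -Crit1 !inE negb_or -andbA.
apply/idP/idP.
- case/and4P => yK ynS1 ynO ynmu.
  have yK1 : y \in K1.
    apply/negPn/negP => yK1; case: (Hout y yK yK1) => g [Ey|Ey].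
      by move: ynO; rewrite Ey inO.
    by move: ynmu; rewrite Ey -muO; case/negP; apply/imsetP; exists (sact to sigma g); rewrite // SE inO orbT.
  rewrite yK1 ynS1 /=; apply: contra ynmu => /imsetP[a aS ->].
  by apply/imsetP; exists a; rewrite ?SE ?aS ?muS1.
- case/and3P => yK1 ynS1 ynmu1.
  rewrite (K1K _ yK1) ynS1 /=; apply/andP; split.
    exact: (contraL (OK1' _) yK1).
  apply/negP => /imsetP[a]; rewrite SE => /orP[aS | /imsetP[g _ ->]] Ey.
    by move: ynmu1; rewrite Ey (muS1 _ aS); case/negP; apply/imsetP; exists a.
  by move: yK1; rewrite Ey muO (negbTE (PK1 g)).
Qed.

End Basics.

Unset Implicit Arguments.

Theorem mainTheorem4 (gT : finGroupType) (V : finType)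
    (to : {action gT &-> V}) (K K' : {set {set V}}) :
  is_Gcomplex to K -> is_Gsubcomplex to K' K ->
  (Gcollapses to K K' <->
   exists (Sigma : {set {set V}}) (mu : {set V} -> {set V}),
     [/\ partial_Gmatching to K Sigma mu,
         acyclic_matching K Sigma mu &
         critical K Sigma mu = K']).
Proof.
move=> [cK iK] [[cK' _] _]; split.
  by move=> H; apply: collapse_match.
case=> Sigma [mu [M A C]].
exact: (@match_collapse _ _ to #|Sigma| K K' Sigma mu (leqnn _) cK cK' M A C).
Qed.
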